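(* Let $0\le c<\sqrt2-1$. Let $a,b_1,b_2$ be positive integers such that $ca$ and $cb_2$ are integers and $b_1/((1+c)b_2)$ is a positive integer. Let $w_1$ be the infinite word $1_{\infty,a}$ or $2_{\infty,a}$, let $w_2=1_{b_1,b_2}2_{b_1,b_2}$, and let $s$ be a (finite) common subsequence of $w_1$ and $w_2$. Then \[\operatorname{span}_{w_1}s+2b_1\ \ge\ (3+c)\operatorname{len} s-\frac{4ab_1}{b_2}.\]
   Context: Words are over the alphabet $\{1,2\}$; $\alpha^m$ denotes letter $\alpha$ repeated $m$ times and $u^m$ denotes $m$ copies of the word $u$ concatenated. For a positive integer $M$ (with the relevant quantities integers), $1_{M,a}=(1^a2^{ca})^{M/((1+c)a)}$ and $2_{M,a}=(2^a1^{ca})^{M/((1+c)a)}$; $1_{\infty,a}$ and $2_{\infty,a}$ denote the infinite repetitions of $1^a2^{ca}$ and $2^a1^{ca}$ respectively. Symbols are distinguishable positions; a common subsequence of $w_1,w_2$ is a pair of subsequences of $w_1$ and $w_2$ equal as words, of length $\operatorname{len} s$. $\operatorname{span}_{w_1}s$ is the length of the shortest block of consecutive symbols of $w_1$ containing the part of $s$ lying in $w_1$. *)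

(* Defs.v *)
From HB Require Import structures.
From mathcomp Require Import all_boot all_order all_algebra.
From mathcomp Require Import reals.
Set Implicit Arguments. Unset Strict Implicit. Unset Printing Implicit Defensive.

(* Periodic pattern with blocks x^a y^k repeated: letter at position i
   (0-indexed) of (x^a y^k)^infinity. *)
Definition blockpat (a k x y : nat) (i : nat) : nat :=
  if i %% (a + k) < a then x else y.

(* 1_{oo,a} and 2_{oo,a}, where k = c*a. *)
Definition one_inf (a k : nat) : nat -> nat := blockpat a k 1 2.
Definition two_inf (a k : nat) : nat -> nat := blockpat a k 2 1.

(* 1_{M,b} = (1^b 2^{k})^{M/(b+k)} and 2_{M,b} = (2^b 1^k)^{M/(b+k)}, with
   k = c*b; when (b+k) divides M these words have length M. *)
Definition one_fin (M b k : nat) : seq nat := mkseq (blockpat b k 1 2) M.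
Definition two_fin (M b k : nat) : seq nat := mkseq (blockpat b k 2 1) M.

(* A common subsequence of an infinite word w1 and a finite word w2, given by
   the strictly increasing lists of positions p (in w1) and q (in w2) of its
   symbols, with equal letters. *)
Definition common_subseq (w1 : nat -> nat) (w2 : seq nat) (p q : seq nat) : Prop :=
  [/\ sorted ltn p, sorted ltn q, size p = size q,
      all (fun j => j < size w2) q & map w1 p = map (nth 0 w2) q].

(* Length of the shortest block of consecutive positions containing all
   positions in p (p strictly increasing); 0 if p is empty. *)
Definition span_pos (p : seq nat) : nat :=
  if p is x :: t then (last x t - x).+1 else 0.

(* Main.v *)
Require Import Defs.
From HB Require Import structures.
From mathcomp Require Import all_boot all_order all_algebra.
From mathcomp Require Import reals.
From mathcomp Require Import zify ring lra.


Lemma count_iota_shift (P0 : pred nat) (P : nat) :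
  (forall i, P0 (i + P) = P0 i) -> forall u, count P0 (iota u P) = count P0 (iota 0 P).
Proof.
case: P => [|P'] hP; first by [].
elim=> // u IH; rewrite -IH.
rewrite -(addn1 P') iotaD /= count_cat /= addn0.
have -> : u.+1 + P' = u + P'.+1 by rewrite addSnnS.
by rewrite hP addn1 /= addnC.
Qed.

Lemma count_iota_split (P0 : pred nat) u v w : u <= v -> v <= w ->
  count P0 (iota u (w - u)) = count P0 (iota u (v - u)) + count P0 (iota v (w - v)).
Proof.
move=> huv hvw.
have -> : w - u = (v - u) + (w - v) by lia.
by rewrite iotaD count_cat subnKC.
Qed.

Lemma count_iota_mul (P0 : pred nat) P :
  (forall i, P0 (i + P) = P0 i) -> forall m u, count P0 (iota u (m * P)) = m * count P0 (iota 0 P).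
Proof.
move=> hP; elim=> [|m IH] u; first by rewrite !mul0n.
by rewrite mulSn iotaD count_cat IH count_iota_shift // mulSn.
Qed.

Lemma density (P0 : pred nat) P : 0 < P ->
  (forall i, P0 (i + P) = P0 i) -> forall L u,
  P * count P0 (iota u L) <= count P0 (iota 0 P) * L + count P0 (iota 0 P) * (P - count P0 (iota 0 P)).
Proof.
move=> P0P hP L; set K := count P0 (iota 0 P).
have KP : K <= P by apply: leq_trans (count_size _ _) _; rewrite size_iota.
have [n] := ubnP L; elim: n L => // n IH L ltLn u.
case: (leqP P L) => hPL.
- have -> : L = P + (L - P) by lia.
  rewrite iotaD count_cat count_iota_shift //.
  have := IH (L - P) ltac:(lia) (u + P).
  rewrite -/K; nia.
- have h1 : count P0 (iota u L) <= L by apply: leq_trans (count_size _ _) _; rewrite size_iota.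
  have h2 : count P0 (iota u L) <= K.
    rewrite /K -(@count_iota_shift P0 P hP u).
    have -> : P = L + (P - L) by lia.
    by rewrite iotaD count_cat leq_addr.
  nia.
Qed.

Lemma count_nth_le (P0 : pred nat) (s q : seq nat) :
  uniq q -> all (fun j => j < size s) q -> count P0 (map (nth 0 s) q) <= count P0 s.
Proof.
move=> uq aq.
rewrite -{2}(mkseq_nth 0 s) /mkseq !count_map -!size_filter.
apply: uniq_leq_size; first exact: filter_uniq.
move=> j; rewrite !mem_filter => /andP[-> jq] /=.
by rewrite mem_iota add0n (allP aq).
Qed.

Lemma path_last (x : nat) s : path ltn x s -> x <= last x s.
Proof.
elim: s x => //= y s IH x /andP[xy ps].
by apply: leq_trans (ltnW xy) (IH _ ps).
Qed.

Lemma count_lt_iota a k : count (fun i => i < a) (iota 0 (a + k)) = a.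
Proof.
rewrite iotaD count_cat add0n.
rewrite (eq_in_count (a2 := predT)); last by move=> i; rewrite mem_iota => /andP[_ /=].
rewrite (eq_in_count (a1 := fun i => i < a) (a2 := pred0)); last first.
  by move=> i; rewrite mem_iota => /andP[/= h _]; rewrite ltnNge h.
by rewrite count_predT count_pred0 size_iota addn0.
Qed.

Lemma mainG (w1 w2f seg wt : nat -> nat) (A C N : nat) :
  (forall j j', j <= j' -> seg j <= seg j') ->
  (forall j j', j < N -> j' < N -> seg j = seg j' -> w2f j = w2f j') ->
  (forall l u W t, t <= count (fun i => w1 i == l) (iota u W) -> wt l * t <= A * W + C) ->
  forall p p0 q q0 u t, path ltn p0 p -> path ltn q0 q -> size p = size q ->
  map w1 (p0 :: p) = map w2f (q0 :: q) -> all (fun j => j < N) (q0 :: q) ->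
  u <= p0 -> t <= count (fun i => w1 i == w1 p0) (iota u (p0 - u)) ->
  wt (w1 p0) * t + sumn (map wt (map w1 (p0 :: p)))
    <= A * (last p0 p - u + 1) + C * (seg (last q0 q) - seg q0 + 1).
Proof.
move=> Hmono Hseg Hdens.
have chunk : forall p0 u t, u <= p0 ->
    t <= count (fun i => w1 i == w1 p0) (iota u (p0 - u)) ->
    wt (w1 p0) * t.+1 <= A * (p0 - u + 1) + C.
  move=> p0 u t up0 ht; apply: (Hdens _ u).
  by rewrite iotaD count_cat /= subnKC // eqxx addn1 ltnS.
elim=> [|p1 p IH] p0 [|q1 q] q0 u t //=.
- move=> _ _ _ _ _ up0 ht.
  have := chunk _ _ _ up0 ht; rewrite subnn; lia.
- move=> /andP[lt01 pp] /andP[lq01 pq] /eqP; rewrite eqSS => /eqP sz.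
  case=> e0 e1 em /and3P[hq0 hq1 hq] up0 ht.
  case: (boolP (seg q1 == seg q0)) => [/eqP es|ns].
  + have ew : w1 p1 = w1 p0 by rewrite e1 e0 (Hseg q1 q0).
    have hm : [seq w1 i | i <- p1 :: p] = [seq w2f i | i <- q1 :: q] by rewrite /= e1 em.
    have ha : all (fun j => j < N) (q1 :: q) by rewrite /= hq1 hq.
    have hu : u <= p1 by lia.
    have ht' : t.+1 <= count (fun i => w1 i == w1 p1) (iota u (p1 - u)).
      rewrite ew (@count_iota_split _ u p0 p1) //; last exact: ltnW.
      have -> : p1 - p0 = (p1 - p0).-1.+1 by lia.
      rewrite /= eqxx add1n addnS ltnS; exact: leq_trans ht (leq_addr _ _).
    have := IH p1 q q1 u t.+1 pp pq sz hm ha hu ht'.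
    rewrite /= ew es.
    rewrite mulnS; lia.
  + have lts : seg q0 < seg q1.
      by rewrite ltn_neqAle eq_sym ns Hmono // ltnW.
    have hm : [seq w1 i | i <- p1 :: p] = [seq w2f i | i <- q1 :: q] by rewrite /= e1 em.
    have ha : all (fun j => j < N) (q1 :: q) by rewrite /= hq1 hq.
    have := IH p1 q q1 p1 0 pp pq sz hm ha (leqnn _) ltac:(by rewrite subnn).
    rewrite muln0 add0n => H.
    have hc := chunk _ _ _ up0 ht.
    have l1 := @path_last p1 p pp.
    have l2 : seg q1 <= seg (last q1 q) by apply: Hmono; exact: (@path_last q1 q pq).
    have e3 : A * (p0 - u + 1) + A * (last p1 p - p1 + 1) <= A * (last p1 p - u + 1).
      rewrite -mulnDr leq_mul2l; apply/orP; right; lia.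
    have e4 : C + C * (seg (last q1 q) - seg q1 + 1) <= C * (seg (last q1 q) - seg q0 + 1).
      rewrite -{1}(muln1 C) -mulnDr leq_mul2l; apply/orP; right; lia.
    move: hc H e3 e4; rewrite /= mulnS; lia.
Qed.

Lemma blockpat_per a k x y i : blockpat a k x y (i + (a + k)) = blockpat a k x y i.
Proof. by rewrite /blockpat modnDr. Qed.

Lemma blockpat_K a k (x y l : nat) : x != y ->
  count (fun i => blockpat a k x y i == l) (iota 0 (a + k)) =
  if l == x then a else if l == y then k else 0.
Proof.
move=> xy.
have E : forall l (P0 : pred nat), (forall i, i < a + k -> (blockpat a k x y i == l) = P0 i) ->
    count (fun i => blockpat a k x y i == l) (iota 0 (a + k)) = count P0 (iota 0 (a + k)).
  move=> l0 P0 h; apply: eq_in_count => i; rewrite mem_iota add0n => /andP[_ hi]; exact: h.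
case: (eqVneq l x) => [->|lx].
  rewrite (E _ (fun i => i < a)) ?count_lt_iota // => i hi.
  rewrite /blockpat modn_small //; case: (i < a); rewrite ?eqxx //=; apply/eqP => e; by move: xy; rewrite e eqxx.
case: (eqVneq l y) => [?|ly].
  subst.
  rewrite (E _ (predC (fun i => i < a))).
    have := count_predC (fun i => i < a) (iota 0 (a + k)).
    rewrite count_lt_iota size_iota; lia.
  move=> i hi; rewrite /blockpat modn_small //=. case: (i < a) => /=; [exact: negbTE | exact: eqxx].
rewrite (E _ pred0) ?count_pred0 // => i hi.
rewrite /blockpat; case: (_ < _); rewrite eq_sym; [exact: negbTE|exact: negbTE].
Qed.

Definition wt (a ka xl l : nat) := if l == xl then a + ka else 3 * a + ka.

Lemma w1_dens a ka xl yl : 0 < a -> ka * ka + 2 * a * ka < a * a -> xl != yl ->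
  forall l u W t, t <= count (fun i => blockpat a ka xl yl i == l) (iota u W) ->
  wt a ka xl l * t <= a * W + a * a.
Proof.
move=> a0 hk xy l u W t ht.
have Ppos : 0 < a + ka by lia.
have D := @density (fun i => blockpat a ka xl yl i == l) _ Ppos
   (fun i => congr1 (fun z => z == l) (blockpat_per a ka xl yl i)) W u.
rewrite blockpat_K // in D.
have hka : ka <= a by nia.
move: D; set N := count _ _ => D.
have hNt : (a + ka) * t <= (a + ka) * N by rewrite leq_mul2l ht orbT.
rewrite /wt; case: (eqVneq l xl) => [e|lx].
  rewrite e eqxx addKn in D *.
  nia.
rewrite (negbTE lx) in D *.
case: (eqVneq l yl) => [e|ly]; last first.
  rewrite (negbTE ly) in D; nia.
rewrite e eqxx in D.
have h1 : (a + ka) * t <= ka * W + ka * a.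
  have h2 : a + ka - ka = a by lia.
  rewrite h2 in D; exact: leq_trans hNt D.
case: (posnP ka) => [k0|kpos].
  rewrite k0 in h1 *; nia.
rewrite -(leq_pmul2l kpos).
have h3 : ka * (3 * a + ka) <= a * (a + ka) by nia.
have h4 : ka * ((3 * a + ka) * t) <= a * ((a + ka) * t) by rewrite !mulnA leq_mul2r h3 orbT.
apply: leq_trans h4 _.
apply: (leq_trans (leq_mul (leqnn a) h1)).
rewrite !mulnDr !mulnA (mulnC a ka); lia.
Qed.

Definition seg2 (b2 kb j : nat) := 2 * (j %/ (b2 + kb)) + (if j %% (b2 + kb) < b2 then 0 else 1).

Lemma nth_w2 b1 b2 kb m j : b1 = m * (b2 + kb) -> 0 < b2 -> j < b1 + b1 ->
  nth 0 (one_fin b1 b2 kb ++ two_fin b1 b2 kb) j =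
  if j %/ (b2 + kb) < m then blockpat b2 kb 1 2 j else blockpat b2 kb 2 1 j.
Proof.
move=> hb1 b20 hj.
have P0 : 0 < b2 + kb by lia.
rewrite nth_cat /one_fin /two_fin size_mkseq ltn_divLR // -hb1.
case: ltnP => h; first by rewrite nth_mkseq.
rewrite nth_mkseq; last by lia.
have e : j %% (b2 + kb) = (j - b1) %% (b2 + kb).
  by rewrite -{1}(subnK h) hb1 addnC modnMDl.
by rewrite /blockpat e.
Qed.

Lemma seg_mono b2 kb j j' : 0 < b2 -> j <= j' -> seg2 b2 kb j <= seg2 b2 kb j'.
Proof.
move=> b20 hj; rewrite /seg2.
set P := b2 + kb.
have P0 : 0 < P by rewrite /P; lia.
have hq := leq_div2r P hj.
have ej := divn_eq j P; have ej' := divn_eq j' P.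
have rj := ltn_pmod j P0; have rj' := ltn_pmod j' P0.
case: (ltngtP (j %/ P) (j' %/ P)) => hq'.
- case: (_ < b2); case: (_ < b2); lia.
- lia.
- have hr : j %% P <= j' %% P.
    move: ej ej'; rewrite hq'; set X := j' %/ P * P; lia.
  rewrite hq'; case: ifP => h1; case: ifP => h2; try lia.
Qed.

Lemma seg_w2 b1 b2 kb m j j' : b1 = m * (b2 + kb) -> 0 < b2 -> j < b1 + b1 -> j' < b1 + b1 ->
  seg2 b2 kb j = seg2 b2 kb j' ->
  nth 0 (one_fin b1 b2 kb ++ two_fin b1 b2 kb) j = nth 0 (one_fin b1 b2 kb ++ two_fin b1 b2 kb) j'.
Proof.
move=> hb1 b20 hj hj' hs.
rewrite (@nth_w2 _ _ _ _ j hb1 b20 hj) (@nth_w2 _ _ _ _ j' hb1 b20 hj').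
move: hs; rewrite /seg2 /blockpat.
case: ifP => h1; case: ifP => h2 hs; try lia;
  have -> : j %/ (b2 + kb) = j' %/ (b2 + kb) by lia.
all: by [].
Qed.

Lemma seg_bound b1 b2 kb m j : b1 = m * (b2 + kb) -> 0 < b2 -> j < b1 + b1 ->
  seg2 b2 kb j < 4 * m.
Proof.
move=> hb1 b20 hj.
have P0 : 0 < b2 + kb by lia.
have : j %/ (b2 + kb) < 2 * m by rewrite ltn_divLR // -mulnA -hb1; lia.
rewrite /seg2; case: ifP => _; lia.
Qed.

Lemma count_w2 b1 b2 kb m (xl : nat) : b1 = m * (b2 + kb) -> (xl == 1) || (xl == 2) ->
  count (fun z => z == xl) (one_fin b1 b2 kb ++ two_fin b1 b2 kb) = b1.
Proof.
move=> hb1 hx.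
rewrite count_cat /one_fin /two_fin /mkseq !count_map hb1.
rewrite !(@count_iota_mul _ (b2 + kb)); last first.
  by move=> i; rewrite /preim /= blockpat_per.
  by move=> i; rewrite /preim /= blockpat_per.
rewrite !blockpat_K //.
by case/orP: hx => /eqP ->; rewrite /=; lia.
Qed.

Lemma sumn_wt a ka xl (s : seq nat) :
  sumn (map (wt a ka xl) s) + 2 * a * count (fun z => z == xl) s = (3 * a + ka) * size s.
Proof.
elim: s => [|x s IH] /=; first by rewrite !muln0.
rewrite /= mulnS -IH {1}/wt /=; case: (eqVneq x xl) => _ /=; rewrite ?add0n ?mulnS ?mulnDr ?muln1; lia.
Qed.

Lemma nat_main a ka b1 b2 kb m xl yl (p q : seq nat) :
  0 < a -> 0 < b2 -> ka * ka + 2 * a * ka < a * a -> b1 = m * (b2 + kb) ->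
  xl != yl -> (xl == 1) || (xl == 2) ->
  common_subseq (blockpat a ka xl yl) (one_fin b1 b2 kb ++ two_fin b1 b2 kb) p q ->
  (3 * a + ka) * size p <= a * (span_pos p + 2 * b1 + 4 * m * (a + ka)).
Proof.
move=> a0 b20 hk hb1 xy hx [sp sq sz aq em].
case: p sp sz em => [|p0 p] sp sz em; first by rewrite muln0.
case: q sq sz aq em => [|q0 q] sq sz aq em; first by [].
have {}sz : size p = size q by move/eqP: sz; rewrite eqSS => /eqP.
set w2 := one_fin b1 b2 kb ++ two_fin b1 b2 kb.
have sw2 : size w2 = b1 + b1 by rewrite size_cat /one_fin /two_fin !size_mkseq.
have G := @mainG (blockpat a ka xl yl) (nth 0 w2) (seg2 b2 kb) (wt a ka xl) a (a * a) (b1 + b1)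
  (fun j j' => @seg_mono b2 kb j j' b20)
  (fun j j' hj hj' => @seg_w2 b1 b2 kb m j j' hb1 b20 hj hj')
  (@w1_dens a ka xl yl a0 hk xy) p p0 q q0 p0 0 sp sq sz em.
rewrite sw2 in aq.
have {}G := G aq (leqnn _) (leq0n _).
rewrite muln0 add0n in G.
have hl : last q0 q < b1 + b1.
  have : last q0 q \in q0 :: q by exact: mem_last.
  by move/(allP aq).
have hsb := @seg_bound b1 b2 kb m _ hb1 b20 hl.
have e4 : a * a * (seg2 b2 kb (last q0 q) - seg2 b2 kb q0 + 1) <= a * a * (4 * m).
  by rewrite leq_mul2l; apply/orP; right; lia.
have hs := sumn_wt a ka xl [seq blockpat a ka xl yl i | i <- p0 :: p].
rewrite size_map in hs.
have hc : count (fun z => z == xl) [seq blockpat a ka xl yl i | i <- p0 :: p] <= b1.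
  rewrite em; apply: leq_trans (eq_leq (@count_w2 b1 b2 kb m xl hb1 hx)).
  apply: count_nth_le.
    by apply: (sorted_uniq ltn_trans ltnn).
  by rewrite sw2.
have e5 : 2 * a * count (fun z => z == xl) [seq blockpat a ka xl yl i | i <- p0 :: p] <= 2 * a * b1.
  by rewrite leq_mul2l hc orbT.
rewrite /span_pos.
have -> : (last p0 p - p0).+1 = last p0 p - p0 + 1 by rewrite addn1.
move: G e4 hs e5; set S := sumn _; set n := size _; set cn := count _ _.
move=> G e4 hs e5.
rewrite -hs.
move: G e4 e5; set L := last p0 p - p0 + 1; set D := (_ - _ + 1).
move=> G e4 e5.
have E : a * (L + 2 * b1 + 4 * m * (a + ka)) = a * L + 2 * a * b1 + a * a * (4 * m) + a * (4 * m * ka).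
  rewrite !mulnDr !mulnA; lia.
rewrite E; lia.
Qed.

Import Order.TTheory GRing.Theory Num.Theory.
Local Open Scope ring_scope.

Theorem lemma3p7 (R : realType) (c : R) (a b1 b2 ka kb m : nat)
    (w1 : nat -> nat) (p q : seq nat) :
  0 <= c -> c < Num.sqrt 2 - 1 ->
  (0 < a)%N -> (0 < b1)%N -> (0 < b2)%N ->
  c * a%:R = ka%:R -> c * b2%:R = kb%:R ->
  b1%:R / ((1 + c) * b2%:R) = m%:R -> (0 < m)%N ->
  (w1 = one_inf a ka \/ w1 = two_inf a ka) ->
  common_subseq w1 (one_fin b1 b2 kb ++ two_fin b1 b2 kb) p q ->
  (3 + c) * (size p)%:R - 4%:R * a%:R * b1%:R / b2%:R
    <= (span_pos p)%:R + 2%:R * b1%:R.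
Proof.
move=> c0 csq a0 b10 b20 hca hcb hm m0 hw1 hcs.
have aR : (0 < a%:R :> R) by rewrite ltr0n.
have bR : (0 < b2%:R :> R) by rewrite ltr0n.
have hb1 : b1 = (m * (b2 + kb))%N.
  apply/eqP; rewrite -(eqr_nat R) natrM natrD -hcb -hm.
  have hd : (1 + c) * b2%:R != 0.
    by rewrite mulf_neq0 // ?lt0r_neq0 // ?gtr0E; lra.
  rewrite (_ : b2%:R + c * b2%:R = (1 + c) * b2%:R); last by ring.
  by rewrite divfK.
have hk : (ka * ka + 2 * a * ka < a * a)%N.
  rewrite -(ltr_nat R) !natrD !natrM -hca.
  have s2 : Num.sqrt (2 : R) ^+ 2 = 2 by rewrite sqr_sqrtr // ler0n.
  have s0 : 0 <= Num.sqrt (2 : R) by apply: sqrtr_ge0.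
  have h1 : (1 + c) ^+ 2 < 2 by nra.
  have h2 : a%:R ^+ 2 * (1 + c) ^+ 2 < a%:R ^+ 2 * 2 :> R by rewrite ltr_pM2l // exprn_gt0.
  rewrite (_ : 2%:R = 2 :> R) //.
  nra.
have [xl [yl [hw [xy hx]]]] : exists xl yl, w1 = blockpat a ka xl yl /\ xl != yl /\ ((xl == 1%N) || (xl == 2%N)).
  by case: hw1 => ->; [exists 1%N, 2%N | exists 2%N, 1%N].
subst w1.
have N := @nat_main a ka b1 b2 kb m xl yl p q a0 b20 hk hb1 xy hx hcs.
have e : 4%:R * a%:R * b1%:R / b2%:R = 4%:R * m%:R * (a%:R + ka%:R) :> R.
  rewrite hb1 natrM natrD -hca -hcb; field.
  by rewrite lt0r_neq0.
rewrite e.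
rewrite -(ler_nat R) !natrM !natrD -hca in N.
rewrite -(ler_pM2l aR).
nra.
Qed.
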